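(* Let $\Phi=(A;A^*;\{E_i\}_{i=0}^d;\{E^*_i\}_{i=0}^d)$ be a Leonard system in $\mathcal A$ with eigenvalue sequence $\theta_0,\dots,\theta_d$, and let $c_i$, $\nu$ be as defined below. Then $$(\theta_0-\theta_1)(\theta_0-\theta_2)\cdots(\theta_0-\theta_d)=\nu\,c_1c_2\cdots c_d .$$
   Context: Let $\mathbb K$ be a field, $d\ge 0$ an integer, and $\mathcal A$ a $\mathbb K$-algebra isomorphic to the full matrix algebra $\mathrm{Mat}_{d+1}(\mathbb K)$; $I$ is its identity. An element of $\mathcal A$ is multiplicity-free if it has $d+1$ mutually distinct eigenvalues in $\mathbb K$. If $A$ is multiplicity-free with eigenvalues $\theta_0,\dots,\theta_d$, the primitive idempotent of $A$ associated with $\theta_i$ is $E_i=\prod_{j\ne i}(A-\theta_jI)/(\theta_i-\theta_j)$. A Leonard system in $\mathcal A$ is a sequence $\Phi=(A;A^*;\{E_i\}_{i=0}^d;\{E^*_i\}_{i=0}^d)$ such that (i) $A,A^*\in\mathcal A$ are multiplicity-free; (ii) $E_0,\dots,E_d$ is an ordering of the primitive idempotents of $A$; (iii) $E^*_0,\dots,E^*_d$ is an ordering of the primitive idempotents of $A^*$; (iv) $E_iA^*E_j=0$ if $|i-j|>1$ and $E_iA^*E_j\ne0$ if $|i-j|=1$ ($0\le i,j\le d$); (v) $E^*_iAE^*_j=0$ if $|i-j|>1$ and $E^*_iAE^*_j\ne0$ if $|i-j|=1$ ($0\le i,j\le d$). Here $A^*$ is merely notation (not an adjoint). Write $\theta_i$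 for the eigenvalue of $A$ associated with $E_i$. The scalar $\mathrm{tr}(E_0E^*_0)$ is nonzero; $\nu$ denotes its multiplicative inverse. Standard basis: for an irreducible (left) $\mathcal A$-module $V$ and a nonzero $u\in E_0V$, the vectors $E^*_0u,\dots,E^*_du$ form a basis of $V$; the matrix of $A$ in this basis is tridiagonal and independent of the choice of $u$; $c_i$ ($1\le i\le d$) is its $(i,i-1)$ entry. *)

(* Defs.v *)
From HB Require Import structures.
From mathcomp Require Import all_boot all_order all_algebra.
Set Implicit Arguments. Unset Strict Implicit. Unset Printing Implicit Defensive.
Import GRing.Theory.
Local Open Scope ring_scope.

(* The algebra 𝒜 ≅ Mat_{d+1}(K) is taken to be 'M[K]_(d.+1) itself; its
   irreducible left module is taken to be the column space 'cV[K]_(d.+1). *)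

Definition is_eigenvalue (K : fieldType) (d : nat) (A : 'M[K]_d.+1) (a : K) :=
  eigenvalue A a.

Definition mult_free (K : fieldType) (d : nat) (A : 'M[K]_d.+1) :=
  exists th : 'I_d.+1 -> K, injective th /\ forall i, is_eigenvalue A (th i).

Definition prim_idem (K : fieldType) (d : nat) (A : 'M[K]_d.+1)
  (th : 'I_d.+1 -> K) (i : 'I_d.+1) : 'M[K]_d.+1 :=
  \prod_(j < d.+1 | j != i) ((th i - th j)^-1 *: (A - (th j)%:M)).

Definition idem_ordering (K : fieldType) (d : nat) (A : 'M[K]_d.+1)
  (E : 'I_d.+1 -> 'M[K]_d.+1) :=
  exists th : 'I_d.+1 -> K, [/\ injective th, (forall i, is_eigenvalue A (th i))
    & forall i, E i = prim_idem A th i].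

Definition Leonard_system (K : fieldType) (d : nat) (A As : 'M[K]_d.+1)
  (E Es : 'I_d.+1 -> 'M[K]_d.+1) :=
  [/\ mult_free A /\ mult_free As, idem_ordering A E, idem_ordering As Es,
   (forall i j : 'I_d.+1,
      ((i.+1 < j)%N || (j.+1 < i)%N -> E i * As * E j = 0) /\
      ((i.+1 == j) || (j.+1 == i) -> E i * As * E j != 0)) &
   (forall i j : 'I_d.+1,
      ((i.+1 < j)%N || (j.+1 < i)%N -> Es i * A * Es j = 0) /\
      ((i.+1 == j) || (j.+1 == i) -> Es i * A * Es j != 0))].

Definition std_basis_mx (K : fieldType) (d : nat) (Es : 'I_d.+1 -> 'M[K]_d.+1)
  (u : 'cV[K]_d.+1) : 'M[K]_d.+1 :=
  \matrix_(r < d.+1, j < d.+1) (Es j *m u) r ord0.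

Definition std_matrix (K : fieldType) (d : nat) (A : 'M[K]_d.+1)
  (Es : 'I_d.+1 -> 'M[K]_d.+1) (u : 'cV[K]_d.+1) : 'M[K]_d.+1 :=
  invmx (std_basis_mx Es u) *m A *m std_basis_mx Es u.

(* c_i = (i, i-1) entry of that matrix, for 1 <= i <= d *)
Definition cseq (K : fieldType) (d : nat) (A : 'M[K]_d.+1)
  (Es : 'I_d.+1 -> 'M[K]_d.+1) (u : 'cV[K]_d.+1) (i : nat) : K :=
  std_matrix A Es u (inord i) (inord i.-1).

Definition nu (K : fieldType) (d : nat) (E Es : 'I_d.+1 -> 'M[K]_d.+1) : K :=
  (\tr (E ord0 * Es ord0))^-1.

(* Main.v *)
Require Import Defs.
From HB Require Import structures.
From mathcomp Require Import all_boot all_order all_algebra.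
Import GRing.Theory.
Local Open Scope ring_scope.
From mathcomp Require Import zify.
Set Implicit Arguments. Unset Strict Implicit.

Lemma col_mulmx (K : fieldType) m n p (B : 'M[K]_(m, n)) (C : 'M[K]_(n, p)) j :
  col j (B *m C) = B *m col j C.
Proof. by apply/matrixP=> i k; rewrite !mxE; apply: eq_bigr => l _; rewrite !mxE. Qed.

Lemma mulmx_sum_col (K : fieldType) m n (B : 'M[K]_(m, n)) (c : 'cV[K]_n) :
  B *m c = \sum_k c k 0 *: col k B.
Proof.
apply/matrixP=> i j; rewrite !mxE summxE; apply: eq_bigr => k _.
by rewrite !mxE (ord1 j) mulrC.
Qed.

Lemma unit_of_ker (K : fieldType) n (P : 'M[K]_n) :
  (forall c : 'cV[K]_n, P *m c = 0 -> c = 0) -> P \in unitmx.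
Proof.
move=> H; rewrite -unitmx_tr -row_free_unit; apply: inj_row_free => v Hv.
have : P *m v^T = 0 by rewrite -(trmxK P) -trmx_mul Hv trmx0.
by move/H/(congr1 trmx); rewrite trmxK trmx0.
Qed.

Lemma eq_on_basis (K : fieldType) n (X F G : 'M[K]_n) : X \in unitmx ->
  (forall j, F *m col j X = G *m col j X) -> F = G.
Proof.
move=> uX H; have: F *m X = G *m X.
  apply/matrixP=> i j; have := congr1 (fun M : 'cV_n => M i 0) (H j).
  by rewrite -!col_mulmx !mxE.
by move/(congr1 (mulmx^~ (invmx X))); rewrite -!mulmxA mulmxV // !mulmx1.
Qed.

Lemma tri_unit (K : fieldType) n (Y : 'M[K]_n) (F : 'I_n -> 'M[K]_n) :
  (forall j k : 'I_n, (k < j)%N -> F j *m col k Y = 0) ->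
  (forall k, F k *m col k Y != 0) -> Y \in unitmx.
Proof.
move=> Hlt Hdiag; apply: unit_of_ker => c Hc.
suff S : forall t, (t <= n)%N -> forall k : 'I_n, (n - t <= k)%N -> c k 0 = 0.
  by apply/matrixP=> i j; rewrite (ord1 j) mxE; apply: (S n) => //; rewrite subnn.
elim=> [|t IH] Ht k Hk.
  by move: (ltn_ord k) Hk; lia.
have [Hk'|Hk'] := leqP (n - t) k; first by apply: IH => //; apply: ltnW.
have := congr1 (mulmx (F k)) Hc; rewrite mulmx0 (@mulmx_sum_col _ _ _ Y) mulmx_sumr.
rewrite (bigD1 k) //= big1 ?addr0.
  move/eqP; rewrite -scalemxAr scaler_eq0 (negbTE (Hdiag k)) orbF.
  by move/eqP.
move=> l Hl; rewrite -scalemxAr.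
have [Hlk|Hlk] := ltnP l k; first by rewrite Hlt // scaler0.
rewrite IH ?scale0r //; first by apply: ltnW.
have : l != k :> nat by [].
by move: Hlk Hk Hk'; lia.
Qed.

Lemma prod_apply (K : fieldType) n (I : Type) (r : seq I) (P : pred I)
  (F : I -> 'M[K]_n.+1) (f : I -> K) (y : 'cV[K]_n.+1) :
  (forall k, P k -> F k *m y = f k *: y) ->
  (\prod_(k <- r | P k) F k) *m y = (\prod_(k <- r | P k) f k) *: y.
Proof.
move=> H; elim: r => [|x r IH]; first by rewrite !big_nil mul1mx scale1r.
rewrite !big_cons; case: (boolP (P x)) => Px //.
by rewrite -mulmxE -mulmxA IH -scalemxAr H // scalerA mulrC.
Qed.

Lemma idem_eig (K : fieldType) d (M : 'M[K]_d.+1) th i j (y : 'cV[K]_d.+1) :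
  injective th -> M *m y = th j *: y ->
  prim_idem M th i *m y = (i == j)%:R *: y.
Proof.
move=> inj Hy; rewrite /prim_idem.
rewrite (@prod_apply _ _ _ _ _ _ (fun k => (th i - th k)^-1 * (th j - th k))).
  case: eqP => [->|/eqP ne].
    by rewrite big1 // => k Hk; rewrite mulVf // subr_eq0; apply/eqP=> /inj /eqP; rewrite eq_sym (negbTE Hk).
  by rewrite (bigD1 j) 1?eq_sym //= subrr mulr0 mul0r.
move=> k _; rewrite -scalemxAl mulmxBl Hy mul_scalar_mx -scalerBl scalerA //.
Qed.

Lemma eig_col (K : fieldType) n (M : 'M[K]_n) a :
  eigenvalue M a -> exists2 x : 'cV[K]_n, M *m x = a *: x & x != 0.
Proof.
move=> H.
have : eigenvalue M^T a.
  move: H; rewrite /eigenvalue /eigenspace !kermx_eq0 !row_free_unit.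
  by rewrite -unitmx_tr linearB /= tr_scalar_mx.
case/eigenvalueP => v Hv nz; exists v^T.
  by rewrite -(trmxK M) -trmx_mul Hv linearZ.
by apply: contra nz => /eqP /(congr1 trmx); rewrite trmxK trmx0 => ->.
Qed.

Lemma col_matrix_of (K : fieldType) n (f : 'I_n -> 'cV[K]_n) j :
  col j (\matrix_(r < n, k < n) f k r 0) = f j.
Proof. by apply/matrixP=> r c; rewrite !mxE (ord1 c). Qed.

Lemma eig_basis (K : fieldType) d (M : 'M[K]_d.+1) th :
  injective th -> (forall i, is_eigenvalue M (th i)) ->
  exists X : 'M[K]_d.+1, [/\ X \in unitmx,
    forall j, M *m col j X = th j *: col j X & forall j, col j X != 0].
Proof.
move=> inj ev.
have [f Hf Hnz] := fin_all_exists2 (fun i => eig_col (ev i)).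
exists (\matrix_(r, k) f k r 0); split; try by move=> j; rewrite col_matrix_of.
apply: (@tri_unit _ _ _ (prim_idem M th)) => [j k Hkj|k]; rewrite col_matrix_of.
  by rewrite (idem_eig _ inj (Hf k)) (_ : (j == k) = false) ?scale0r //; apply/negbTE; rewrite neq_ltn Hkj orbT.
by rewrite (idem_eig _ inj (Hf k)) eqxx scale1r.
Qed.

Lemma idem_eigvec (K : fieldType) d (M : 'M[K]_d.+1) th i :
  injective th -> (forall i, is_eigenvalue M (th i)) ->
  M *m prim_idem M th i = th i *: prim_idem M th i.
Proof.
move=> inj ev; have [X [uX HX _]] := eig_basis inj ev.
apply: (eq_on_basis uX) => j; rewrite -mulmxA (idem_eig _ inj (HX j)).
rewrite -scalemxAr HX scalerA -scalemxAl (idem_eig _ inj (HX j)) scalerA; case: eqP => [->|]; first by rewrite mulrC.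
by move=> _; rewrite !mulr0 mul0r.
Qed.

Lemma idem_comm (K : fieldType) d (M : 'M[K]_d.+1) th i :
  injective th -> (forall i, is_eigenvalue M (th i)) ->
  prim_idem M th i *m M = M *m prim_idem M th i.
Proof.
move=> inj ev; have [X [uX HX _]] := eig_basis inj ev.
apply: (eq_on_basis uX) => j; rewrite -!mulmxA HX -scalemxAr (idem_eig _ inj (HX j)).
by rewrite -scalemxAr HX !scalerA mulrC.
Qed.

Lemma idem_sum (K : fieldType) d (M : 'M[K]_d.+1) th :
  injective th -> (forall i, is_eigenvalue M (th i)) ->
  \sum_i prim_idem M th i = 1%:M.
Proof.
move=> inj ev; have [X [uX HX _]] := eig_basis inj ev.
apply: (eq_on_basis uX) => j; rewrite mulmx_suml mul1mx.
rewrite (bigD1 j) //= big1 ?addr0; first by rewrite (idem_eig _ inj (HX j)) eqxx scale1r.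
by move=> k /negbTE nk; rewrite (idem_eig _ inj (HX j)) nk scale0r.
Qed.

Lemma eig_unique (K : fieldType) d (M : 'M[K]_d.+1) (th : 'I_d.+1 -> K) i (y z : 'cV[K]_d.+1) :
  injective th -> (forall i, is_eigenvalue M (th i)) ->
  M *m y = th i *: y -> M *m z = th i *: z -> z != 0 -> exists c, y = c *: z.
Proof.
move=> inj ev Hy Hz nz; have [X [uX HX Xnz]] := eig_basis inj ev.
have dec : forall w : 'cV_d.+1, M *m w = th i *: w -> w = (invmx X *m w) i 0 *: col i X.
  move=> w Hw; have Ew := idem_eig i inj Hw; rewrite eqxx scale1r in Ew.
  have wX : w = X *m (invmx X *m w) by rewrite mulKVmx.
  rewrite -{1}Ew {1}wX (@mulmx_sum_col _ _ _ X) mulmx_sumr (bigD1 i) //= big1 ?addr0.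
    by rewrite -scalemxAr (idem_eig _ inj (HX i)) eqxx scale1r.
  by move=> k /negbTE nk; rewrite -scalemxAr (idem_eig _ inj (HX k)) eq_sym nk scale0r scaler0.
set b := (invmx X *m z) i 0.
have bnz : b != 0 by apply: contra nz => /eqP b0; rewrite (dec z Hz) -/b b0 scale0r.
exists ((invmx X *m y) i 0 / b); rewrite {1}(dec y Hy) [in RHS](dec z Hz) -/b scalerA.
by rewrite divfK.
Qed.

Lemma hess (K : fieldType) d (T : 'M[K]_d.+1) :
  (forall i k : 'I_d.+1, (k.+1 < i)%N -> T i k = 0) ->
  forall m, (m <= d)%N -> forall a : nat -> K,
  (forall i : 'I_d.+1, (m < i)%N -> (\prod_(k < m) (T - (a k)%:M)) i ord0 = 0) /\
  (\prod_(k < m) (T - (a k)%:M)) (inord m) ord0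
     = \prod_(1 <= k < m.+1) T (inord k) (inord k.-1).
Proof.
move=> HT; elim=> [|m IH] Hm a.
  rewrite big_ord0 big_geq //; split; last first.
    rewrite mxE; have -> : inord 0 = ord0 :> 'I_d.+1 by apply/val_inj; rewrite /= inordK.
    by rewrite eqxx.
  by move=> i Hi; rewrite mxE; case: eqP => // /(congr1 val) /= Hi0; rewrite Hi0 in Hi.
have [IH1 IH2] := IH (ltnW Hm) (fun k => a k.+1).
rewrite big_ord_recl -mulmxE mulmxBl mul_scalar_mx.
have -> : \big[*%R/1]_(i < m) (T - (a (@lift (m.+1) ord0 i))%:M) = \prod_(k < m) (T - (a k.+1)%:M).
  by apply: eq_bigr => k _.
set Q := \prod_(k < m) _ in IH1 IH2 *.
have hsum : forall i : 'I_d.+1, (m.+1 <= i)%N ->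
   \sum_j T i j * Q j ord0 = T i (inord m) * Q (inord m) ord0.
  move=> i Hi; rewrite (bigD1 (inord m)) //= big1 ?addr0 // => l Hl.
  have [Hlm|Hlm] := ltnP l m.
    by rewrite HT ?mul0r //; move: Hlm Hi; lia.
  rewrite IH1 ?mulr0 //; rewrite ltn_neqAle Hlm andbT.
  by apply: contra Hl => /eqP ml; apply/eqP/val_inj; rewrite /= inordK // ml; apply: leq_trans (ltn_ord l).
split.
  move=> i Hi; rewrite !mxE hsum; last by move: Hi; lia.
  rewrite (IH1 i); last by move: Hi; lia.
  rewrite HT ?mul0r ?mulr0 ?subrr //; rewrite inordK; move: Hi Hm; lia.
rewrite !mxE hsum; last by rewrite inordK //; move: Hm; lia.
rewrite (IH1 (inord m.+1)); last by rewrite inordK //; move: Hm; lia.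
rewrite mulr0 subr0 IH2 [in RHS]big_nat_recr //= mulrC.
by [].
Qed.

Lemma intertwine (K : fieldType) d (A P T : 'M[K]_d.+1) :
  A *m P = P *m T -> forall m (a : nat -> K),
  (\prod_(k < m) (A - (a k)%:M)) *m P = P *m \prod_(k < m) (T - (a k)%:M).
Proof.
move=> H; elim=> [|m IH] a; first by rewrite !big_ord0 mul1mx mulmx1.
rewrite !big_ord_recl -!mulmxE -mulmxA.
have -> : forall M : 'M[K]_d.+1, \big[*%R/1]_(i < m) (M - (a (@lift (m.+1) ord0 i))%:M) = \prod_(k < m) (M - (a k.+1)%:M).
  by move=> M; apply: eq_bigr => k _.
rewrite (IH (fun k => a k.+1)) !mulmxA; congr (_ *m _).
by rewrite !mulmxBl !mulmxBr H mul_scalar_mx mul_mx_scalar.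
Qed.

Lemma nz_col (K : fieldType) n (M : 'M[K]_n) : M != 0 -> exists w : 'cV[K]_n, M *m w != 0.
Proof.
move=> nz; case: (boolP [exists j, M *m col j 1%:M != 0]) => [/existsP [j Hj]|/existsPn H].
  by exists (col j 1%:M).
case/eqP: nz; apply: (eq_on_basis (unitmx1 _ _)) => j; rewrite mul0mx.
by have := H j; rewrite negbK => /eqP.
Qed.

Lemma entry_col (K : fieldType) m n p (B : 'M[K]_(m, n)) (C : 'M[K]_(n, p)) i j :
  (B *m C) i j = (B *m col j C) i 0.
Proof. by rewrite !mxE; apply: eq_bigr => k _; rewrite !mxE. Qed.

Lemma prod_nz0 (R : pzSemiRingType) d (F : 'I_d.+1 -> R) :
  \prod_(j < d.+1 | j != ord0) F j = \prod_(k < d) F (inord k.+1).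
Proof.
rewrite big_mkcond big_ord_recl eqxx /= mul1r; apply: eq_bigr => k _.
have -> : lift ord0 k = inord k.+1 :> 'I_d.+1 by apply/val_inj; rewrite /= inordK // ltnS.
by [].
Qed.

Lemma Fcomb (K : fieldType) n (P : 'M[K]_n) (F : 'I_n -> 'M[K]_n) j (c : 'cV[K]_n) :
  (forall j k, F j *m col k P = (j == k)%:R *: col k P) ->
  F j *m (P *m c) = c j 0 *: col j P.
Proof.
move=> H; rewrite (@mulmx_sum_col _ _ _ P) mulmx_sumr (bigD1 j) //= big1 ?addr0.
  by rewrite -scalemxAr H eqxx scale1r.
by move=> k /negbTE nk; rewrite -scalemxAr H eq_sym nk scale0r scaler0.
Qed.

Unset Implicit Arguments. Set Strict Implicit.

Theorem theorem11p5 (K : fieldType) (d : nat) (A As : 'M[K]_d.+1)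
  (E Es : 'I_d.+1 -> 'M[K]_d.+1) (th : 'I_d.+1 -> K) (u : 'cV[K]_d.+1) :
  Leonard_system A As E Es ->
  injective th -> (forall i, is_eigenvalue A (th i)) ->
  (forall i, E i = prim_idem A th i) ->
  u != 0 -> E ord0 *m u = u ->
  \prod_(i < d.+1 | i != ord0) (th ord0 - th i)
    = nu E Es * \prod_(1 <= i < d.+1) cseq A Es u i.
Proof.
case=> _ _ [ths [injs evs Esdef]] LE LEs inj ev Edef unz E0u.
have E_eig : forall i (w : 'cV_d.+1), A *m (E i *m w) = th i *: (E i *m w).
  by move=> i w; rewrite Edef mulmxA idem_eigvec // scalemxAl.
have Es_eig : forall i (w : 'cV_d.+1), As *m (Es i *m w) = ths i *: (Es i *m w).
  by move=> i w; rewrite Esdef mulmxA idem_eigvec // scalemxAl.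
have E_on : forall i j (y : 'cV_d.+1), A *m y = th j *: y -> E i *m y = (i == j)%:R *: y.
  by move=> i j y Hy; rewrite Edef; apply: idem_eig.
have Es_on : forall i j (y : 'cV_d.+1), As *m y = ths j *: y -> Es i *m y = (i == j)%:R *: y.
  by move=> i j y Hy; rewrite Esdef; apply: idem_eig.
have Esum : \sum_i E i = 1%:M.
  by rewrite -(idem_sum inj ev); apply: eq_bigr => i _; rewrite Edef.
have LEz : forall i j : 'I_d.+1, (j.+1 < i)%N -> E i *m As *m E j = 0.
  by move=> i j H; apply: (LE i j).1; rewrite H orbT.
have LEnz : forall i j : 'I_d.+1, (j.+1 == i) -> E i *m As *m E j != 0.
  by move=> i j H; apply: (LE i j).2; rewrite H orbT.
have LEsz : forall i j : 'I_d.+1, (j.+1 < i)%N -> Es i *m A *m Es j = 0.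
  by move=> i j H; apply: (LEs i j).1; rewrite H orbT.
have LEsnz : forall i j : 'I_d.+1, (j.+1 == i) -> Es i *m A *m Es j != 0.
  by move=> i j H; apply: (LEs i j).2; rewrite H orbT.
have Au : A *m u = th ord0 *: u by rewrite -E0u E_eig.

have claim : forall k, (k <= d)%N ->
  (forall j : 'I_d.+1, (k < j)%N -> E j *m (As ^+ k *m u) = 0) /\
  E (inord k) *m (As ^+ k *m u) != 0.
  elim=> [|k IH] Hk.
    rewrite expr0 mul1mx; split.
      move=> j Hj; rewrite -E0u (E_on j ord0) ?E_eig //.
      by rewrite (_ : (j == ord0) = false) ?scale0r //; apply/negbTE; rewrite neq_ltn Hj orbT.
    by rewrite (_ : inord 0 = ord0) ?E0u //; apply/val_inj; rewrite /= inordK.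
  have [IH1 IH2] := IH (ltnW Hk).
  set y := As ^+ k *m u in IH1 IH2 *.
  have -> : As ^+ k.+1 *m u = As *m y by rewrite exprS -mulmxE mulmxA.
  have decomp : forall j, E j *m (As *m y) = \sum_l (E j *m As *m E l) *m y.
    by move=> j; rewrite -mulmx_suml -mulmx_sumr Esum mulmx1 mulmxA.
  have ik : (inord k : 'I_d.+1) = k :> nat by rewrite inordK // ltnS ltnW.
  split.
    move=> j Hj; rewrite decomp big1 // => l _.
    have [Hlk|Hlk] := leqP l k.
      by rewrite LEz ?mul0mx //; move: Hlk Hj; lia.
    by rewrite -mulmxA IH1 ?mulmx0.
  rewrite decomp (bigD1 (inord k)) //= big1 ?addr0; last first.
    move=> l Hl; have Hl' : l != k :> nat by apply: contra Hl => /eqP e; apply/eqP/val_inj; rewrite /= ik.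
    have [Hlk|Hlk] := ltnP l k.
      by rewrite LEz ?mul0mx // inordK; move: Hlk Hl' Hk; lia.
    by rewrite -mulmxA IH1 ?mulmx0 //; move: Hlk Hl'; lia.
  have Hs : (inord k : 'I_d.+1).+1 == (inord k.+1 : 'I_d.+1) by rewrite ik inordK.
  have [w Hw] := nz_col (LEnz _ _ Hs).
  have [c Hc] := eig_unique inj ev (E_eig (inord k) w) (E_eig (inord k) y) IH2.
  apply: contra Hw => /eqP H0.
  by rewrite -mulmxA Hc -scalemxAr mulmxA H0 scaler0.
have Yu : (\matrix_(r < d.+1, k < d.+1) (As ^+ k *m u) r 0) \in unitmx.
  apply: (@tri_unit _ _ _ E) => [j k Hkj|k]; rewrite col_matrix_of.
    by apply: (claim k (ltn_ord k)).1.
  by have := (claim k (ltn_ord k)).2; rewrite inord_val.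
have vnz : forall i, Es i *m u != 0.
  move=> i; apply/negP => /eqP Hi.
  have [x Hx xnz] := eig_col (evs i).
  have : Es i = 0.
    apply: (eq_on_basis Yu) => k; rewrite col_matrix_of mul0mx mulmxA.
    have cm : GRing.comm (Es i) As by rewrite /GRing.comm -!mulmxE Esdef idem_comm.
    by have := commrX k cm; rewrite /GRing.comm -!mulmxE => ->; rewrite -mulmxA Hi mulmx0.
  move/(congr1 (mulmx^~ x)); rewrite (Es_on i i x Hx) eqxx scale1r mul0mx => /eqP.
  by rewrite (negbTE xnz).

set P := std_basis_mx Es u.
have colP : forall j, col j P = Es j *m u by move=> j; rewrite /P /std_basis_mx col_matrix_of.
have EsP : forall j k, Es j *m col k P = (j == k)%:R *: col k P.
  by move=> j k; rewrite colP; apply: Es_on; apply: Es_eig.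
have uP : P \in unitmx.
  apply: (@tri_unit _ _ _ Es) => [j k Hkj|k].
    by rewrite EsP (_ : (j == k) = false) ?scale0r //; apply/negbTE; rewrite neq_ltn Hkj orbT.
  by rewrite EsP eqxx scale1r colP.
set T := std_matrix A Es u.
have APT : A *m P = P *m T by rewrite /T /std_matrix -/P !mulmxA mulmxV // mul1mx.
have H1 : forall i m, Es i *m (A *m col m P) = T i m *: col i P.
  move=> i m; rewrite -col_mulmx APT col_mulmx Fcomb // mxE.
  by [].
have Tz : forall i m : 'I_d.+1, (m.+1 < i)%N -> T i m = 0.
  move=> i m Him; have := H1 i m; rewrite colP !mulmxA LEsz // mul0mx => /esym /eqP.
  by rewrite scaler_eq0 colP (negbTE (vnz i)) orbF => /eqP.
have Tnz : forall k, (1 <= k <= d)%N -> T (inord k) (inord k.-1) != 0.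
  move=> k /andP [k1 kd].
  have ik : (inord k : 'I_d.+1) = k :> nat by rewrite inordK.
  have ik1 : (inord k.-1 : 'I_d.+1) = k.-1 :> nat by rewrite inordK //; move: kd; lia.
  have Hs : (inord k.-1 : 'I_d.+1).+1 == (inord k : 'I_d.+1) by rewrite ik ik1; move: k1; lia.
  have [w Hw] := nz_col (LEsnz _ _ Hs).
  have [c Hc] := eig_unique injs evs (Es_eig (inord k.-1) w) (Es_eig (inord k.-1) u) (vnz _).
  apply: contra Hw => /eqP T0.
  by rewrite -mulmxA Hc -scalemxAr -mulmxA -colP H1 T0 scale0r scaler0.

set x := invmx P *m u.
have xone : forall j, x j 0 = 1.
  move=> j; have := Fcomb j x EsP; rewrite /x mulKVmx // colP => H.
  have : (x j 0 - 1) *: (Es j *m u) = 0 by rewrite scalerBl -H scale1r subrr.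
  move/eqP; rewrite scaler_eq0 (negbTE (vnz j)) orbF subr_eq0 => /eqP.
  by rewrite /x.
have [lam Hlam] := eig_unique inj ev (E_eig ord0 (Es ord0 *m u)) Au unz.
have trE : \tr (E ord0 *m Es ord0) = lam.
  rewrite -[E ord0 *m Es ord0]mulmx1 -(mulmxV uP) mulmxA mxtrace_mulC /mxtrace.
  rewrite (bigD1 ord0) //= big1 ?addr0.
    rewrite entry_col col_mulmx -mulmxA EsP eqxx scale1r colP Hlam -scalemxAr -/x mxE xone.
    by rewrite mulr1.
  move=> i /negbTE ni; rewrite entry_col col_mulmx -mulmxA EsP eq_sym ni scale0r mulmx0 mulmx0.
  by rewrite mxE.
have E0Q : E ord0 = \prod_(k < d) (th ord0 - th (inord k.+1))^-1 *:
                    \prod_(k < d) (A - (th (inord k.+1))%:M).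
  by rewrite Edef /prim_idem scaler_prod !prod_nz0.
have [_ Hd] := hess Tz (leqnn d) (fun k => th (inord k.+1)).
have IT := intertwine APT d (fun k => th (inord k.+1)).
set Q := \prod_(k < d) (A - _) in E0Q IT.
set QT := \prod_(k < d) (T - _) in Hd IT.
set kap := \prod_(k < d) _ in E0Q.
have key : invmx P *m (E ord0 *m col ord0 P) = kap *: col ord0 QT.
  by rewrite E0Q -scalemxAl -col_mulmx IT col_mulmx -scalemxAr mulKmx.
have lamE : lam = kap * \prod_(1 <= k < d.+1) T (inord k) (inord k.-1).
  have := congr1 (fun M : 'cV_d.+1 => M (inord d) ord0) key.
  rewrite /= colP Hlam -scalemxAr -/x mxE xone mulr1 => ->.
  by rewrite mxE mxE Hd.
have -> : nu E Es = (\tr (E ord0 *m Es ord0))^-1 by [].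
have -> : \prod_(1 <= i < d.+1) cseq A Es u i = \prod_(1 <= k < d.+1) T (inord k) (inord k.-1) by [].
rewrite trE lamE /kap prodfV prod_nz0.
set L := \prod_(k < d) _.
set C := \prod_(1 <= k < d.+1) _.
have Cnz : C != 0.
  rewrite /C prodf_seq_neq0; apply/allP => k; rewrite mem_index_iota => Hk.
  by apply/implyP => _; apply: Tnz.
by rewrite invfM invrK -mulrA mulVf // mulr1.
Qed.
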